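(* In the two-bus model of the context, fix a total demand $d>0$ and generation capacities $\overline{\mathbf q}=(\overline q_1,\overline q_2)$ with $\overline q_1\ge d$. Let $\mathcal D$ be the set of demand profiles $\mathbf d=(d_1,d_2)$ with $d_1,d_2\ge 0$, $d_1+d_2=d$, such that $(\overline{\mathbf q},\mathbf d)$ is feasible for both \textsf{ED-2b} and \textsf{SCED-2b}. Let $\mathbf d^*=(d-\min\{d,f^{\mathsf{ed}}\},\ \min\{d,f^{\mathsf{ed}}\})$ and assume $\mathbf d^*\in\mathcal D$. Then for every $\mathbf d\in\mathcal D$, $\mathsf{PoS}(\overline{\mathbf q},\mathbf d)\le\mathsf{PoS}(\overline{\mathbf q},\mathbf d^* )$, and, writing $\mathbf d^*=(d_1^*,d_2^* )$, $$\mathsf{PoS}(\overline{\mathbf q},\mathbf d^* )=\frac{\alpha_1\big(d_1^*+\min\{f^{\mathsf{sc}},d_2^*\}\big)+\alpha_2\,[d_2^*-f^{\mathsf{sc}}]^+}{\alpha_1 d},$$ where $[x]^+=\max\{x,0\}$.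
   Context: Two-bus network: buses $v_1,v_2$ joined by two parallel lines $e_1,e_2$ with susceptances $B_1,B_2>0$ and thermal limits $\overline f_1,\overline f_2>0$. Bus $i\in\{1,2\}$ has a generator with capacity $\overline q_i\ge 0$ and linear cost $\alpha_i q_i$, and a demand $d_i\ge 0$; throughout $0<\alpha_1\le\alpha_2$ (bus 1 is the cheap bus). An instance is $\boldsymbol\omega=(\overline{\mathbf q},\mathbf d)$ with $\overline{\mathbf q}=(\overline q_1,\overline q_2)$, $\mathbf d=(d_1,d_2)$. Define $f^{\mathsf{ed}}:=(B_1+B_2)\min\{\overline f_1/B_1,\overline f_2/B_2\}$ and $f^{\mathsf{sc}}:=\min\{\overline f_1,\overline f_2\}$ (note $f^{\mathsf{sc}}\le f^{\mathsf{ed}}$). The economic dispatch problem \textsf{ED-2b} is: minimize $\alpha_1q_1+\alpha_2q_2$ over $(q_1,q_2)$ subject to $0\le q_1\le\overline q_1$, $0\le q_2\le\overline q_2$, $q_1+q_2=d_1+d_2$, and $-f^{\mathsf{ed}}\le q_1-d_1\le f^{\mathsf{ed}}$. The security-constrained problem \textsf{SCED-2b} is the same problem with the additional constraint $-f^{\mathsf{sc}}\le q_1-d_1\le f^{\mathsf{sc}}$. Let $c^\star_{\mathsf{ed}}(\boldsymbol\omega)$ and $c^\star_{\mathsf{sc}}(\boldsymbol\omega)$ be the optimal values of \textsf{ED-2b} and \textsf{SCED-2b} for an instance $\boldsymbol\omega$ feasible for both. The price of security of $\boldsymbol\omega$ is $\mathsf{PoS}(\boldsymbol\omega):=c^\star_{\mathsf{sc}}(\boldsymbol\omega)/c^\star_{\mathsf{ed}}(\boldsymbol\omega)$.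 *)

(* Defs.v *)
From Stdlib Require Import Reals Lra.
Open Scope R_scope.

(* Network parameters: susceptances B1 B2 and thermal limits fb1 fb2. *)
Definition f_ed (B1 B2 fb1 fb2 : R) : R := (B1 + B2) * Rmin (fb1 / B1) (fb2 / B2).
Definition f_sc (fb1 fb2 : R) : R := Rmin fb1 fb2.

Definition ed_feas (fed qb1 qb2 d1 d2 q1 q2 : R) : Prop :=
  0 <= q1 <= qb1 /\ 0 <= q2 <= qb2 /\ q1 + q2 = d1 + d2 /\
  - fed <= q1 - d1 <= fed.

Definition sced_feas (fed fsc qb1 qb2 d1 d2 q1 q2 : R) : Prop :=
  ed_feas fed qb1 qb2 d1 d2 q1 q2 /\ - fsc <= q1 - d1 <= fsc.

Definition is_opt_value (F : R -> R -> Prop) (a1 a2 c : R) : Prop :=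
  (exists q1 q2, F q1 q2 /\ a1 * q1 + a2 * q2 = c) /\
  (forall q1 q2, F q1 q2 -> c <= a1 * q1 + a2 * q2).

Definition feasible (F : R -> R -> Prop) : Prop := exists q1 q2, F q1 q2.

Definition pos_part (x : R) : R := Rmax x 0.

Definition PoS (fed fsc a1 a2 qb1 qb2 d1 d2 p : R) : Prop :=
  exists cs ce,
    is_opt_value (sced_feas fed fsc qb1 qb2 d1 d2) a1 a2 cs /\
    is_opt_value (ed_feas fed qb1 qb2 d1 d2) a1 a2 ce /\
    p = cs / ce.

Definition in_D (fed fsc qb1 qb2 d d1 d2 : R) : Prop :=
  0 <= d1 /\ 0 <= d2 /\ d1 + d2 = d /\
  feasible (ed_feas fed qb1 qb2 d1 d2) /\
  feasible (sced_feas fed fsc qb1 qb2 d1 d2).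

(* Main.v *)
Require Import Defs.
From Stdlib Require Import Reals Lra.
Open Scope R_scope.

Lemma opt_unique F a1 a2 c c' :
  is_opt_value F a1 a2 c -> is_opt_value F a1 a2 c' -> c = c'.
Proof.
  intros [[q1 [q2 [Hf He]]] H] [[q1' [q2' [Hf' He']]] H'].
  specialize (H _ _ Hf'). specialize (H' _ _ Hf). lra.
Qed.

Lemma ed_opt fed a1 a2 qb1 qb2 d1 d2 :
  0 < a1 -> a1 <= a2 -> 0 <= fed -> 0 <= d1 -> 0 <= d2 -> d1 + d2 <= qb1 ->
  feasible (ed_feas fed qb1 qb2 d1 d2) ->
  is_opt_value (ed_feas fed qb1 qb2 d1 d2) a1 a2
    (a1 * Rmin (d1+d2) (d1+fed) + a2 * (d1 + d2 - Rmin (d1+d2) (d1+fed))).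
Proof.
  intros ha h12 hf h1 h2 hq [q1 [q2 Hq]].
  unfold ed_feas in *.
  assert (Hm : forall q1 q2, ed_feas fed qb1 qb2 d1 d2 q1 q2 -> q1 <= Rmin (d1+d2) (d1+fed)).
  { intros p1 p2 Hp. unfold ed_feas in Hp. unfold Rmin; destruct Rle_dec; lra. }
  pose proof (Hm q1 q2 Hq) as Hq1.
  split.
  - exists (Rmin (d1+d2) (d1+fed)), (d1 + d2 - Rmin (d1+d2) (d1+fed)).
    split; [|reflexivity].
    revert Hq1. unfold Rmin; destruct Rle_dec; intros; lra.
  - intros p1 p2 Hp. pose proof (Hm _ _ Hp). unfold ed_feas in Hp. nra.
Qed.

Lemma sced_opt fed fsc a1 a2 qb1 qb2 d1 d2 :
  0 < a1 -> a1 <= a2 -> 0 <= fsc -> fsc <= fed -> 0 <= d1 -> 0 <= d2 -> d1 + d2 <= qb1 ->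
  feasible (sced_feas fed fsc qb1 qb2 d1 d2) ->
  is_opt_value (sced_feas fed fsc qb1 qb2 d1 d2) a1 a2
    (a1 * Rmin (d1+d2) (d1+fsc) + a2 * (d1 + d2 - Rmin (d1+d2) (d1+fsc))).
Proof.
  intros ha h12 hf hf' h1 h2 hq [q1 [q2 Hq]].
  unfold sced_feas, ed_feas in *.
  assert (Hm : forall q1 q2, sced_feas fed fsc qb1 qb2 d1 d2 q1 q2 -> q1 <= Rmin (d1+d2) (d1+fsc)).
  { intros p1 p2 Hp. unfold sced_feas, ed_feas in Hp. unfold Rmin; destruct Rle_dec; lra. }
  pose proof (Hm q1 q2 Hq) as Hq1.
  split.
  - exists (Rmin (d1+d2) (d1+fsc)), (d1 + d2 - Rmin (d1+d2) (d1+fsc)).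
    split; [|reflexivity].
    revert Hq1. unfold Rmin; destruct Rle_dec; intros; lra.
  - intros p1 p2 Hp. pose proof (Hm _ _ Hp). unfold sced_feas, ed_feas in Hp. nra.
Qed.

Lemma div_le a b c e : 0 < b -> 0 < e -> a * e <= c * b -> a / b <= c / e.
Proof.
  intros hb he H.
  apply (Rmult_le_reg_r (b*e)); [nra|].
  replace (a / b * (b * e)) with (a * e) by (field; lra).
  replace (c / e * (b * e)) with (c * b) by (field; lra).
  exact H.
Qed.

Theorem lemma3 (B1 B2 fb1 fb2 a1 a2 qb1 qb2 d : R)
  (hB1 : 0 < B1) (hB2 : 0 < B2) (hf1 : 0 < fb1) (hf2 : 0 < fb2)
  (ha1 : 0 < a1) (ha12 : a1 <= a2)
  (hq1 : 0 <= qb1) (hq2 : 0 <= qb2)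
  (hd : 0 < d) (hqd : d <= qb1) :
  let fed := f_ed B1 B2 fb1 fb2 in
  let fsc := f_sc fb1 fb2 in
  let d2s := Rmin d fed in
  let d1s := d - d2s in
  in_D fed fsc qb1 qb2 d d1s d2s ->
  (forall d1 d2 p ps,
      in_D fed fsc qb1 qb2 d d1 d2 ->
      PoS fed fsc a1 a2 qb1 qb2 d1 d2 p ->
      PoS fed fsc a1 a2 qb1 qb2 d1s d2s ps ->
      p <= ps) /\
  PoS fed fsc a1 a2 qb1 qb2 d1s d2s
    ((a1 * (d1s + Rmin fsc d2s) + a2 * pos_part (d2s - fsc)) / (a1 * d)).
Proof.
  intros fed fsc d2s d1s HD.
  assert (Hsc : 0 < fsc) by (unfold fsc, f_sc, Rmin; destruct Rle_dec; lra).
  assert (Hle : fsc <= fed).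
  { unfold fsc, fed, f_sc, f_ed.
    assert (E1 : fb1 = (fb1/B1)*B1) by (field; lra).
    assert (E2 : fb2 = (fb2/B2)*B2) by (field; lra).
    assert (P1 : 0 < fb1/B1) by (apply Rdiv_lt_0_compat; lra).
    assert (P2 : 0 < fb2/B2) by (apply Rdiv_lt_0_compat; lra).
    set (r1 := fb1/B1) in *. set (r2 := fb2/B2) in *.
    unfold Rmin; destruct (Rle_dec fb1 fb2); destruct (Rle_dec r1 r2); nra. }
  destruct HD as [h1s [h2s [hsum [Fe Fs]]]].
  pose proof (ed_opt fed a1 a2 qb1 qb2 d1s d2s ha1 ha12 ltac:(lra) h1s h2s ltac:(lra) Fe) as Oe.
  pose proof (sced_opt fed fsc a1 a2 qb1 qb2 d1s d2s ha1 ha12 ltac:(lra) Hle h1s h2s ltac:(lra) Fs) as Os.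
  rewrite hsum in Oe, Os.
  assert (HM : Rmin d (d1s + fed) = d).
  { unfold d1s, d2s, Rmin; repeat destruct Rle_dec; lra. }
  rewrite HM in Oe.
  set (ms := Rmin d (d1s + fsc)) in *.
  assert (Hms : ms <= d) by (unfold ms, Rmin; destruct Rle_dec; lra).
  split.
  - intros d1 d2 p ps [h1 [h2 [hs [Fe' Fs']]]] [cs [ce [Os' [Oe' Hp]]]]
      [cs2 [ce2 [Os2 [Oe2 Hps]]]].
    pose proof (ed_opt fed a1 a2 qb1 qb2 d1 d2 ha1 ha12 ltac:(lra) h1 h2 ltac:(lra) Fe') as Oe1.
    pose proof (sced_opt fed fsc a1 a2 qb1 qb2 d1 d2 ha1 ha12 ltac:(lra) Hle h1 h2 ltac:(lra) Fs') as Os1.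
    rewrite hs in Oe1, Os1.
    rewrite (opt_unique _ _ _ _ _ Os' Os1) in Hp.
    rewrite (opt_unique _ _ _ _ _ Oe' Oe1) in Hp.
    rewrite (opt_unique _ _ _ _ _ Os2 Os) in Hps.
    rewrite (opt_unique _ _ _ _ _ Oe2 Oe) in Hps.
    subst p ps.
    set (m := Rmin d (d1 + fed)).
    set (m' := Rmin d (d1 + fsc)).
    assert (Hm : m <= d) by (unfold m, Rmin; destruct Rle_dec; lra).
    apply div_le.
    + nra.
    + nra.
    + assert (Hc : 0 <= a2 - a1) by lra.
      assert (hd1 : d1 <= d) by lra.
      destruct (Rle_dec d1s d1) as [HA|HB].
      * assert (Em : m = d) by (unfold m, d1s, d2s, Rmin in *; repeat destruct Rle_dec; lra).
        assert (Em' : ms <= m') by (unfold m', ms, Rmin in *; repeat destruct Rle_dec; lra).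
        rewrite Em.
        assert (0 <= (a2 - a1) * (m' - ms)) by (apply Rmult_le_pos; lra).
        assert (0 <= ((a2 - a1) * (m' - ms)) * (a1 * d)) by (apply Rmult_le_pos; nra).
        nra.
      * assert (Ed1s : d1s = d - fed) by (unfold d1s, d2s, Rmin in *; repeat destruct Rle_dec; lra).
        assert (Em : m = d1 + fed) by (unfold m; rewrite Ed1s in HB; unfold Rmin; destruct Rle_dec; lra).
        assert (Em' : m' = d1 + fsc) by (unfold m'; rewrite Ed1s in HB; unfold Rmin; destruct Rle_dec; lra).
        assert (Ems : ms = d1s + fsc) by (unfold ms; rewrite Ed1s in *; unfold Rmin; destruct Rle_dec; lra).
        rewrite Em, Em'.
        assert (0 <= ((a2 - a1) * (d1s - d1)) * ((a2 - a1) * (d - ms))).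
        { apply Rmult_le_pos; apply Rmult_le_pos; lra. }
        rewrite Ems in *. nra.
  - exists (a1 * ms + a2 * (d - ms)), (a1 * d + a2 * (d - d)).
    split; [exact Os|]. split; [exact Oe|].
    f_equal; [|ring].
    unfold ms, pos_part, d1s, d2s, Rmin, Rmax; repeat destruct Rle_dec; try lra; nra.
Qed.
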